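(* A measure $\mu$ on $\mathbb Z$ is a doubling minimizer if and only if it is constant.
   Context: $\mathbb Z$ is regarded as the infinite path graph with edges $\{j,j+1\}$ and distance $d(i,j)=|i-j|$. A measure $\mu$ is a weight function $\mu:\mathbb Z\to(0,\infty)$, with $\mu(A)=\sum_{v\in A}\mu(v)$. Closed balls are $B(x,r)=\{y:|x-y|\le r\}$. The doubling constant is $C_\mu=\sup\{\mu(B(x,2k+1))/\mu(B(x,k)): x\in \mathbb Z,\ k\in\{0,1,2,\dots\}\}$; $\mu$ is doubling if $C_\mu<\infty$; $C_{\mathbb Z}=\inf\{C_\mu:\mu\text{ doubling}\}$. A doubling minimizer is a doubling measure $\mu$ with $C_\mu=C_{\mathbb Z}$. *)

(* Defs.v *)
From HB Require Import structures.
From mathcomp Require Import all_boot all_order all_algebra.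
From mathcomp Require Import all_classical all_reals.
Set Implicit Arguments. Unset Strict Implicit. Unset Printing Implicit Defensive.
Import Order.TTheory GRing.Theory Num.Theory.
Local Open Scope classical_set_scope.
Local Open Scope ring_scope.

(* A measure on Z: a weight function mu : int -> R, assumed positive
   separately where needed.  mu(B(x,r)) for the closed ball
   B(x,r) = {y : |x - y| <= r} = {x - r, ..., x + r}. *)
Definition ball_measure {R : realType} (mu : int -> R) (x : int) (r : nat) : R :=
  \sum_(i < (2 * r).+1) mu (x - r%:Z + i%:Z).

Definition doubling_ratios {R : realType} (mu : int -> R) : set R :=
  [set t | exists (x : int) (k : nat),
      t = ball_measure mu x (2 * k).+1 / ball_measure mu x k].

Definition is_measure {R : realType} (mu : int -> R) : Prop :=
  forall x, 0 < mu x.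

Definition doubling {R : realType} (mu : int -> R) : Prop :=
  is_measure mu /\ has_ubound (doubling_ratios mu).

(* C_mu (meaningful when mu is doubling) *)
Definition doubling_const {R : realType} (mu : int -> R) : R :=
  sup (doubling_ratios mu).

Definition CZ (R : realType) : R :=
  inf [set c | exists mu : int -> R, doubling mu /\ c = doubling_const mu].

Definition doubling_minimizer {R : realType} (mu : int -> R) : Prop :=
  doubling mu /\ doubling_const mu = CZ R.

(* Main.v *)
Require Import Defs.
From mathcomp Require Import all_boot all_order all_algebra.
From mathcomp Require Import all_classical all_reals.
From mathcomp Require Import zify ring lra.
Import Order.TTheory GRing.Theory Num.Theory.
Local Open Scope classical_set_scope.
Local Open Scope ring_scope.

Lemma bm0 {R : realType} (mu : int -> R) x : ball_measure mu x 0 = mu x.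
Proof. by rewrite /ball_measure big_ord_recr big_ord0 /= add0r subr0 addr0. Qed.

Lemma bm1 {R : realType} (mu : int -> R) x :
  ball_measure mu x (2 * 0).+1 = mu (x - 1) + mu x + mu (x + 1).
Proof.
rewrite /ball_measure !big_ord_recr big_ord0 /= add0r addr0.
by congr (mu _ + mu _ + mu _); lia.
Qed.

Lemma bmc {R : realType} (c : R) x r : ball_measure (fun _ => c) x r = c *+ (2 * r).+1.
Proof. by rewrite /ball_measure sumr_const card_ord. Qed.

Lemma concave_const {R : realType} (mu : int -> R) : (forall x, 0 < mu x) ->
  (forall x, mu (x - 1) + mu (x + 1) <= 2 * mu x) -> forall x, mu x = mu 0.
Proof.
move=> hp H.
pose d x := mu (x + 1) - mu x.
have dE y : d y = mu (y + 1) - mu y by [].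
have dS x : d (x + 1) <= d x.
  have := H (x + 1); rewrite addrK /d; lra.
have dN x (n : nat) : d (x + n%:Z) <= d x.
  elim: n => [|n IH]; first by rewrite addr0.
  apply: le_trans IH; rewrite -[n.+1]addn1 PoszD addrA; exact: dS.
have dle x : d x <= 0.
  rewrite leNgt; apply/negP => dpos.
  have Hm (n : nat) : mu (x - n%:Z) <= mu x - n%:R * d x.
    elim: n => [|n IH]; first by rewrite subr0 mul0r subr0.
    have e : x - n.+1%:Z + 1 = x - n%:Z by lia.
    have := dN (x - n.+1%:Z) n.+1; rewrite subrK (dE (x - n.+1%:Z)) e => h.
    rewrite -natr1 mulrDl mul1r; lra.
  have b0 : 0 <= mu x / d x by rewrite divr_ge0 // ltW.
  have := archi_boundP b0; set N := Num.bound _ => hN.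
  have := Hm N; have := hp (x - N%:Z).
  rewrite ltr_pdivrMr // in hN. nra.
have dge x : 0 <= d x.
  rewrite leNgt; apply/negP => dneg.
  have Hm (n : nat) : mu (x + n%:Z) <= mu x + n%:R * d x.
    elim: n => [|n IH]; first by rewrite addr0 mul0r addr0.
    have e : x + n%:Z + 1 = x + n.+1%:Z by lia.
    have := dN x n; rewrite (dE (x + n%:Z)) e => h.
    rewrite -natr1 mulrDl mul1r; lra.
  have b0 : 0 <= mu x / (- d x) by apply: divr_ge0; [exact: ltW | lra].
  have := archi_boundP b0; set N := Num.bound _ => hN.
  have := Hm N; have := hp (x + N%:Z).
  rewrite ltr_pdivrMr in hN; [nra|lra].
have dz x : mu (x + 1) = mu x by have := dle x; have := dge x; rewrite /d; lra.
have pos (n : nat) : mu n%:Z = mu 0.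
  elim: n => // n IH; by rewrite -[n.+1]addn1 PoszD dz.
have neg (n : nat) : mu (- n%:Z) = mu 0.
  elim: n => [|n IH]; first by rewrite oppr0.
  by rewrite -IH -(dz (- n.+1%:Z)) -[n.+1]addn1 PoszD opprD addrNK.
move=> [n|n]; first exact: pos.
by rewrite NegzE neg.
Qed.

Lemma r_le {R : realType} {mu : int -> R} {x} : doubling mu ->
  ball_measure mu x (2 * 0).+1 / ball_measure mu x 0 <= doubling_const mu.
Proof.
move=> [_ hub]; apply: ub_le_sup => //; by exists x, 0%N.
Qed.

Lemma conc_of {R : realType} {mu : int -> R} : (forall x, 0 < mu x) ->
  (forall x, ball_measure mu x (2 * 0).+1 / ball_measure mu x 0 <= 3) ->
  forall x, mu x = mu 0.
Proof.
move=> hp H; apply: concave_const => // x.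
have := H x; rewrite bm1 bm0 ler_pdivrMr //; have := hp x; lra.
Qed.

Lemma sup_ge3 {R : realType} (mu : int -> R) : doubling mu -> 3 <= doubling_const mu.
Proof.
move=> hd; rewrite leNgt; apply/negP => hlt.
have hc := conc_of hd.1 (fun x => le_trans (r_le hd) (ltW hlt)).
have := @r_le _ mu 0 hd; rewrite bm1 bm0 (hc (0 - 1)) (hc (0 + 1)).
have := hd.1 0; move=> h0.
rewrite (_ : (mu 0 + mu 0 + mu 0) / mu 0 = 3); first by lra.
by field; lra.
Qed.

Lemma const_C {R : realType} (c : R) : 0 < c ->
  doubling (fun _ : int => c) /\ doubling_const (fun _ : int => c) = 3.
Proof.
move=> hc.
have rle k : (c *+ (2 * (2 * k).+1).+1) / (c *+ (2 * k).+1) <= 3.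
  rewrite ler_pdivrMr; last by rewrite pmulrn_rgt0.
  have e n : c *+ n = c * n%:R by rewrite mulr_natr.
  rewrite !e.
  rewrite mulrCA ler_pM2l // -natrM ler_nat; lia.
have ub : ubound (doubling_ratios (fun _ : int => c)) 3.
  by move=> t [x [k ->]]; rewrite !bmc.
have m3 : doubling_ratios (fun _ : int => c) 3.
  exists 0, 0%N; rewrite !bmc.
  rewrite (_ : (2 * (2 * 0).+1).+1 = 3%N) // (_ : (2 * 0).+1 = 1%N) // mulr1n.
  rewrite -[c *+ 3]mulr_natr; field; lra.
split; first by split => //; exists 3.
apply/le_anti/andP; split.
  by apply: ge_sup => //; exists 3.
by apply: ub_le_sup => //; exists 3.
Qed.

Lemma CZ3 (R : realType) : CZ R = 3.
Proof.
have [d1 e1] := @const_C R 1 ltr01.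
have lb : lbound [set c | exists mu : int -> R, doubling mu /\ c = doubling_const mu] 3.
  by move=> c [mu [hd ->]]; exact: sup_ge3.
apply/le_anti/andP; split.
  apply: ge_inf; first by exists 3.
  by exists (fun _ => 1).
by apply: lb_le_inf => //; exists 3, (fun _ => 1).
Qed.

Theorem theorem4p6 (R : realType) (mu : int -> R) (hmu : forall x, 0 < mu x) :
  doubling_minimizer mu <-> exists c : R, forall x, mu x = c.
Proof.
split.
  move=> [hd hC]; exists (mu 0); apply: conc_of => // x.
  by rewrite -(CZ3 R) -hC; exact: r_le.
move=> [c hc].
have -> : mu = (fun _ => c) by apply: boolp.funext.
have c0 : 0 < c by rewrite -(hc 0).
have [hd e] := @const_C R c c0.
by split => //; rewrite e CZ3.
Qed.
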